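(* Let $D$ be a strongly connected orientation of a subgraph of $G$, and let $\mathcal S_D$ be the set of strongly connected orientations $D'$ of $G^\circ$ ($G$ with its bridges deleted) with $D\subseteq D'$. For $D'\in\mathcal S_D$ let $v^{D'}$ be the unique point of $H$ with $2\langle v^{D'},x^C\rangle=q(x^C)$ for all circuits $C\subseteq D'$. Then $F=\mathrm{conv}\{v^{D'}: D'\in\mathcal S_D\}$ is a face of $V_O$, and $\phi(F)=D$, where $\phi(F)=\bigcup\{\mathrm{supp}(\lambda): \lambda\in\Xi_1,\ F\subseteq H_\lambda\}$. In particular the map $\phi$ from faces of $V_O$ to strongly connected orientations of subgraphs of $G$ is surjective.
   Context: $G=(V,E)$ is a finite connected graph, possibly with parallel edges and loops; $\mathbb E$ is the set of oriented edges ($e$ and its reverse $\bar e$). Real $1$-chains $x:\mathbb E\to\mathbb R$ satisfy $x_{\bar e}=-x_e$; $\langle x,y\rangle=\sum_{e\in E}x_ey_e$, $q(x)=\langle x,x\rangle$. A flow satisfies $\sum_{e\text{ with tail }v}x_e=0$ at every vertex $v$; $H$ is the space of real flows and $\Lambda$ the lattice of integer flows. $V_O=\{x\in H: q(x)\le q(x-\mu)\ \forall\mu\in\Lambda\}$. For a flow $x$, $\mathrm{supp}(x)=\{e\in\mathbb E: x_e>0\}$. A circuit is an orientation of a cycle as a directed cycle; $x^C_e=1$ if $e\in C$, $-1$ if $\bar e\in C$, $0$ otherwise. $\Xi_1=\{x^C: C\text{ a circuit}\}$; for $\lambda\in\Xi_1$, $H_\lambda=\{x\in H: 2\langle x,\lambda\rangle=q(\lambda)\}$.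 An orientation of a subgraph (a set of oriented edges containing exactly one of $e,\bar e$ for each edge of the subgraph) is strongly connected if on each connected component any two vertices are joined by directed paths in both directions. *)

(* Defs.v *)
From HB Require Import structures.
From mathcomp Require Import all_boot all_order all_algebra.
Set Implicit Arguments. Unset Strict Implicit. Unset Printing Implicit Defensive.
Import Order.TTheory GRing.Theory Num.Theory.
Local Open Scope ring_scope.

(* A finite graph (parallel edges, loops allowed): vertices V, edges E, each
   edge e has a reference orientation from [t e] to [h e].  The oriented edges
   are E * bool: (e,true) = e, (e,false) = reverse of e. *)

Section Graph.
Variables (V E : finType) (t h : E -> V).

Definition otail (o : E * bool) : V := if o.2 then t o.1 else h o.1.
Definition ohead (o : E * bool) : V := if o.2 then h o.1 else t o.1.

Definition adjG : rel V := fun u v =>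
  [exists e, ((t e == u) && (h e == v)) || ((t e == v) && (h e == u))].
Definition adjG_minus (e0 : E) : rel V := fun u v =>
  [exists e, (e != e0) && (((t e == u) && (h e == v)) || ((t e == v) && (h e == u)))].

Definition graph_connected : Prop := forall u v, connect adjG u v.

Definition bridge (e : E) : bool := ~~ connect (adjG_minus e) (t e) (h e).

(* a set of oriented edges containing at most one of e, \bar e for each e:
   an orientation of the subgraph formed by the underlying edges *)
Definition is_orientation (D : {set E * bool}) : Prop :=
  forall e, ~~ (((e, true) \in D) && ((e, false) \in D)).

Definition dirrel (D : {set E * bool}) : rel V := fun u v =>
  [exists o in D, (otail o == u) && (ohead o == v)].
Definition undrel (D : {set E * bool}) : rel V := fun u v =>
  dirrel D u v || dirrel D v u.

Definition strongly_connected (D : {set E * bool}) : Prop :=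
  is_orientation D /\ forall u v, connect (undrel D) u v -> connect (dirrel D) u v.

Definition orientation_of_Gcirc (D : {set E * bool}) : Prop :=
  is_orientation D /\ forall e, (((e, true) \in D) || ((e, false) \in D)) = ~~ bridge e.

(* circuits: orientations of cycles as directed cycles *)
Definition is_circuit (C : {set E * bool}) : Prop :=
  exists s : seq (E * bool),
    [/\ s != [::], uniq (map fst s), uniq (map otail s),
        cycle (fun o1 o2 => ohead o1 == otail o2) s & C = [set o in s]].

Variable R : realFieldType.

(* real 1-chains, given by their values on the reference orientations *)
Definition oval (x : {ffun E -> R}) (o : E * bool) : R :=
  if o.2 then x o.1 else - x o.1.

Definition dot (x y : {ffun E -> R}) : R := \sum_e x e * y e.
Definition q (x : {ffun E -> R}) : R := dot x x.

Definition is_flow (x : {ffun E -> R}) : Prop :=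
  forall v, \sum_(e | t e == v) x e - \sum_(e | h e == v) x e = 0.

Definition intc (m : {ffun E -> int}) : {ffun E -> R} := [ffun e => (m e)%:~R].
Definition subc (x y : {ffun E -> R}) : {ffun E -> R} := [ffun e => x e - y e].

Definition VO (x : {ffun E -> R}) : Prop :=
  is_flow x /\ forall m : {ffun E -> int}, is_flow (intc m) -> q x <= q (subc x (intc m)).

Definition xC (C : {set E * bool}) : {ffun E -> R} :=
  [ffun e => if (e, true) \in C then 1 else if (e, false) \in C then -1 else 0].

Definition Xi1 (lam : {ffun E -> R}) : Prop := exists C, is_circuit C /\ lam = xC C.

Definition Hlam (lam x : {ffun E -> R}) : Prop := is_flow x /\ 2 * dot x lam = q lam.

Definition phi (F : {ffun E -> R} -> Prop) (o : E * bool) : Prop :=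
  exists lam, [/\ Xi1 lam, (forall x, F x -> Hlam lam x) & 0 < oval lam o].

Definition is_vD (D' : {set E * bool}) (v : {ffun E -> R}) : Prop :=
  is_flow v /\ forall C, is_circuit C -> C \subset D' -> 2 * dot v (xC C) = q (xC C).

Definition in_SD (D D' : {set E * bool}) : Prop :=
  [/\ strongly_connected D', orientation_of_Gcirc D' & D \subset D'].

Definition conv (P : {ffun E -> R} -> Prop) (x : {ffun E -> R}) : Prop :=
  exists n (p : 'I_n -> {ffun E -> R}) (w : 'I_n -> R),
    [/\ forall i, P (p i), forall i, 0 <= w i, \sum_i w i = 1
      & forall e, x e = \sum_i w i * p i e].

Definition FD (D : {set E * bool}) : {ffun E -> R} -> Prop :=
  conv (fun v => exists D', in_SD D D' /\ is_vD D' v).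

Definition is_face (K F : {ffun E -> R} -> Prop) : Prop :=
  exists (a : {ffun E -> R}) (b : R),
    (forall x, K x -> dot a x <= b) /\ (forall x, F x <-> K x /\ dot a x = b).

End Graph.

(* Main.v *)
Require Import Defs.
From HB Require Import structures.
From mathcomp Require Import all_boot all_order all_algebra.
From mathcomp Require Import ring lra zify.
From Stdlib Require Import Classical ClassicalEpsilon.
Import Order.TTheory GRing.Theory Num.Theory.
Set Implicit Arguments. Unset Strict Implicit. Unset Printing Implicit Defensive.

Definition pb (P : Prop) : bool := if excluded_middle_informative P then true else false.
Lemma pbP P : reflect P (pb P).
Proof. rewrite /pb; case: excluded_middle_informative => H; by constructor. Qed.

Section Walks.
Variables (V E : finType) (t h : E -> V).
Notation arc := (E * bool)%type.
Notation otail := (Defs.otail t h).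
Notation ohead := (Defs.ohead t h).

Definition orev (o : arc) : arc := (o.1, ~~ o.2).
Lemma otail_rev o : otail (orev o) = ohead o. Proof. by case: o => e []. Qed.
Lemma ohead_rev o : ohead (orev o) = otail o. Proof. by case: o => e []. Qed.

Fixpoint wk (v : V) (s : seq arc) : bool :=
  if s is o :: s' then (otail o == v) && wk (ohead o) s' else true.
Definition wend v s := last v (map ohead s).
Definition arel (o1 o2 : arc) := ohead o1 == otail o2.
Definition cwalk (s : seq arc) := [&& s != [::], cycle arel s & uniq (map otail s)].
Definition sw v s := wk v s && uniq (v :: map ohead s).

Lemma wend_cons v o s : wend v (o :: s) = wend (ohead o) s. Proof. by []. Qed.

Lemma wk_cat v s1 s2 : wk v (s1 ++ s2) = wk v s1 && wk (wend v s1) s2.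
Proof. by elim: s1 v => //= o s1 IH v; rewrite IH andbA. Qed.

Lemma wend_cat v s1 s2 : wend v (s1 ++ s2) = wend (wend v s1) s2.
Proof. by rewrite /wend map_cat last_cat. Qed.

Lemma wk_rcons v s o : wk v (rcons s o) = wk v s && (otail o == wend v s).
Proof. by rewrite -cats1 wk_cat /= andbT. Qed.

Lemma wend_rcons v s o : wend v (rcons s o) = ohead o.
Proof. by rewrite /wend map_rcons last_rcons. Qed.

Lemma path_wk o s : path arel o s = wk (ohead o) s.
Proof. by elim: s o => //= o1 s IH o; rewrite IH /arel eq_sym. Qed.

Lemma cycle_wk o s : cycle arel (o :: s) = wk (ohead o) s && (wend (ohead o) s == otail o).
Proof. by rewrite /= path_wk wk_rcons eq_sym. Qed.

Lemma otails_wk v s : wk v s -> map otail s = belast v (map ohead s).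
Proof. by elim: s v => //= o s IH v /andP[/eqP -> Hw]; rewrite (IH _ Hw). Qed.

Lemma mem_wk v s o : wk v s -> o \in s -> (otail o \in v :: map ohead s) && (ohead o \in map ohead s).
Proof.
move=> Hw Ho; rewrite (map_f _ Ho) andbT; apply: mem_belast.
by rewrite -(otails_wk Hw) (map_f _ Ho).
Qed.

Lemma ends_same (o o' : arc) : o.1 = o'.1 -> otail o \in [:: otail o'; ohead o'].
Proof. by case: o o' => e [] [e' []] /= ->; rewrite !inE eqxx ?orbT. Qed.

Lemma sw_cons v o s : sw v (o :: s) -> [/\ otail o = v, v \notin ohead o :: map ohead s & sw (ohead o) s].
Proof.
by rewrite /sw /= => /andP[/andP[/eqP -> ->]] /andP[Hv ->]; split.
Qed.

Lemma sw_uniq_fst v s : sw v s -> uniq (map fst s).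
Proof.
elim: s v => //= o s IH v /sw_cons [Ht Hv Hs]; rewrite (IH _ Hs) andbT.
apply/mapP => [[o' Ho' He]].
move: (ends_same He); rewrite Ht !inE => /orP[] /eqP Hq.
  case/andP: Hs => Hw _; have := mem_wk Hw Ho'; rewrite -Hq => /andP[H1 _].
  by rewrite H1 in Hv.
case/andP: Hs => Hw _; have := mem_wk Hw Ho'; rewrite -Hq => /andP[_ H1].
by move: Hv; rewrite inE H1 orbT.
Qed.

Lemma sw_ends a s o' : sw a s -> o' \in s -> otail o' \in [:: a; wend a s] ->
  ohead o' \in [:: a; wend a s] -> s = [:: o'].
Proof.
case: s => [//|o1 s] Hs; case/sw_cons: (Hs) => Ht Hv Hs1.
rewrite inE => /orP[/eqP Eo|Ho'].
  subst o'; rewrite wend_cons => _; rewrite !inE => /orP[/eqP Eq|/eqP Eq].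
    by rewrite Eq inE eqxx in Hv.
  case: s Hs1 Eq {Hs Hv} => //= o2 s /andP[_ /andP[Hn _]] Eq.
  have : last (ohead o2) (map ohead s) \in ohead o2 :: map ohead s by apply: mem_last.
  by rewrite /wend /= in Eq; rewrite -Eq (negbTE Hn).
rewrite wend_cons !inE => H1 H2.
case/andP: Hs1 => Hw Hu.
have /andP[M1 M2] := mem_wk Hw Ho'.
have Na : forall x, x \in ohead o1 :: map ohead s -> x != a.
  by move=> x Hx; apply/eqP => Eq; subst x; rewrite Hx in Hv.
have E1 : otail o' = wend (ohead o1) s.
  by case/orP: H1 => /eqP // Eq; move: (Na _ M1); rewrite Eq eqxx.
have E2 : ohead o' = wend (ohead o1) s.
  case/orP: H2 => /eqP // Eq; have : ohead o' \in ohead o1 :: map ohead s by rewrite inE M2 orbT.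
  by move/Na; rewrite Eq eqxx.
(* o' is a loop in a simple walk: impossible *)
exfalso.
have : forall v s, sw v s -> o' \in s -> otail o' != ohead o'.
  move=> {Hw Hu M1 M2 E1 E2 Na H1 H2 Ho' Hv Ht Hs} v s0; elim: s0 v => // o3 s3 IH v3 Hs3.
  case/sw_cons: Hs3 => T3 V3 S3; rewrite inE; case/orP => [/eqP Eo|]; last exact: IH S3.
  by rewrite Eo T3; apply/eqP => Eq; rewrite Eq inE eqxx in V3.
have Hsw : sw (ohead o1) s by rewrite /sw Hw Hu.
by move/(_ _ _ Hsw Ho'); rewrite E1 E2 eqxx.
Qed.

Lemma rev_of (o o' : arc) : o'.1 = o.1 -> otail o' != otail o -> o' = orev o.
Proof. by case: o o' => e [] [e' []] /= -> //; rewrite eqxx. Qed.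

Lemma cwalk_cases s : cwalk s -> uniq (map fst s) \/ exists o, s = [:: o; orev o].
Proof.
case: s => [//|o s]; rewrite /cwalk cycle_wk => /and3P[_ /andP[Hw /eqP He] Hu].
have Hsw : sw (ohead o) s.
  rewrite /sw Hw lastI; rewrite /wend in He; rewrite He rcons_uniq.
  by rewrite /= (otails_wk Hw) in Hu.
have := sw_uniq_fst Hsw; case Hin: (o.1 \in map fst s); last by move=> Hu'; left; rewrite /= Hin Hu'.
move=> _; right; case/mapP: Hin => o' Ho' He'.
have Hs : s = [:: o'].
  apply: (sw_ends Hsw Ho'); rewrite He.
    by have := ends_same (esym He'); rewrite !inE orbC.
  have := ends_same (o := orev o') (o' := o); rewrite otail_rev /= => /(_ (esym He')).
  by rewrite !inE orbC.
subst s; exists o; congr (_ :: [:: _]); apply: rev_of => //.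
by move: Hu; rewrite /= inE andbT eq_sym.
Qed.

Lemma cwalk_of_sw a s o : sw a s -> wend a s = otail o -> ohead o = a -> cwalk (o :: s).
Proof.
move=> /andP[Hw Hu] He Hh; rewrite /cwalk cycle_wk Hh Hw He eqxx /=.
rewrite (otails_wk Hw); move: Hu; rewrite lastI /wend in He *; rewrite He rcons_uniq.
by [].
Qed.

Lemma cwalk_wk o s : cwalk (o :: s) -> wk (ohead o) s /\ wend (ohead o) s = otail o.
Proof. by rewrite /cwalk cycle_wk => /and3P[_ /andP[-> /eqP ->]]. Qed.

Lemma cwalk_rot s o : cwalk s -> o \in s -> exists s', cwalk (o :: s') /\ perm_eq s (o :: s').
Proof.
move=> Hc Ho; move: Hc; case/splitPr: Ho => s1 s2 Hc; exists (s2 ++ s1).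
have Eq : rot (size s1) (s1 ++ o :: s2) = o :: s2 ++ s1 by rewrite rot_size_cat.
split; last by rewrite -Eq perm_sym perm_rot.
case/and3P: Hc => _ Hc Hu; rewrite /cwalk -Eq rot_cycle map_rot rot_uniq Hc Hu.
by rewrite Eq.
Qed.

Lemma reach_end (r : rel V) a s : wk a s -> (forall o, o \in s -> connect r (otail o) (ohead o)) ->
  connect r a (wend a s).
Proof.
elim: s a => [|o s IH] a /=; first by rewrite connect0.
move=> /andP[/eqP Ht Hw] Hst; apply: connect_trans (IH _ Hw _).
  by rewrite -Ht Hst // inE eqxx.
by move=> o' Ho'; apply: Hst; rewrite inE Ho' orbT.
Qed.

Lemma cwalk_reach (r : rel V) s o : cwalk s -> (forall o, o \in s -> connect r (otail o) (ohead o)) ->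
  o \in s -> connect r (ohead o) (otail o).
Proof.
move=> Hc Hst Ho; have [s' [Hc' Hp]] := cwalk_rot Hc Ho.
have [Hw He] := cwalk_wk Hc'; rewrite -He; apply: reach_end => // o' Ho'.
by apply: Hst; rewrite (perm_mem Hp) inE Ho' orbT.
Qed.

Lemma path_to_walk (r : rel V) (P : pred arc) :
  (forall u v, r u v -> exists o, [/\ P o, otail o = u & ohead o = v]) ->
  forall x l, path r x l -> exists s, [/\ wk x s, map ohead s = l & all P s].
Proof.
move=> HP x l; elim: l x => [|y l IH] x /=; first by exists [::].
case/andP => /HP [o [Po Ht Hh]] /IH [s [Hw Hm Ha]].
by exists (o :: s); rewrite /= Ht eqxx Hh Hw Hm Po Ha.
Qed.

Lemma connect_walk (r : rel V) (P : pred arc) :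
  (forall u v, r u v -> exists o, [/\ P o, otail o = u & ohead o = v]) ->
  forall x y, connect r x y -> exists s, [/\ sw x s, wend x s = y & all P s].
Proof.
move=> HP x y /connectP [l Hl ->]; case: (shortenP Hl) => l' Hl' Hu _.
have [s [Hw Hm Ha]] := path_to_walk HP Hl'.
by exists s; rewrite /sw /wend Hw Hm Hu Ha.
Qed.

Lemma dirrel_arc (D : {set arc}) o : o \in D -> dirrel t h D (otail o) (ohead o).
Proof. by move=> Ho; apply/existsP; exists o; rewrite Ho !eqxx. Qed.

Lemma dirrel_ex (D : {set arc}) u v : dirrel t h D u v -> exists o, [/\ o \in D, otail o = u & ohead o = v].
Proof. by case/existsP => o /andP[Ho /andP[/eqP <- /eqP <-]]; exists o. Qed.

Lemma dirrel_mono (D D1 : {set arc}) u v : D \subset D1 ->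
  connect (dirrel t h D) u v -> connect (dirrel t h D1) u v.
Proof.
move=> Hs; apply: connect_sub => x y /dirrel_ex [o [Ho <- <-]].
by apply: connect1; apply: dirrel_arc; apply: (subsetP Hs).
Qed.

Lemma SC_crit (D : {set arc}) : is_orientation D ->
  (forall o, o \in D -> connect (dirrel t h D) (ohead o) (otail o)) -> strongly_connected t h D.
Proof.
move=> Ho Hc; split => // u v; apply: connect_sub => x y /orP[H|].
  by apply: connect1.
by case/dirrel_ex => o [Hd <- <-]; apply: Hc.
Qed.

Lemma SC_arc (D : {set arc}) o : strongly_connected t h D -> o \in D ->
  connect (dirrel t h D) (ohead o) (otail o).
Proof.
case=> _ Hs Ho; apply: Hs; apply: connect1; apply/orP; right; exact: dirrel_arc.
Qed.

Lemma orient_uniq (D : {set arc}) s : is_orientation D -> cwalk s -> all (mem D) s -> uniq (map fst s).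
Proof.
move=> HD /cwalk_cases [//|[o ->]] /=; rewrite andbT => /andP[H1 H2].
by move: (HD o.1); case: o H1 H2 => e [] /= -> ->.
Qed.

Lemma arc_cycle (D : {set arc}) o : strongly_connected t h D -> o \in D ->
  exists s, [/\ cwalk (o :: s), all (mem D) (o :: s) & uniq (map fst (o :: s))].
Proof.
move=> HS Ho; have := SC_arc HS Ho.
case/(connect_walk (P := mem D) (@dirrel_ex D)) => s [Hsw He Ha].
have Hc : cwalk (o :: s) by apply: cwalk_of_sw Hsw He _.
exists s; split => //=; first by rewrite Ho Ha.
by apply: (orient_uniq HS.1 Hc); rewrite /= Ho Ha.
Qed.

Lemma adjm_sym e : symmetric (adjG_minus t h e).
Proof.
move=> u v; apply/existsP/existsP => [] [e' /andP[He H]]; exists e'; rewrite He /=;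
by rewrite orbC.
Qed.

Lemma adjm_arc e u v : adjG_minus t h e u v -> exists o, [/\ o.1 != e, otail o = u & ohead o = v].
Proof.
case/existsP => e' /andP[He /orP[] /andP[/eqP H1 /eqP H2]].
  by exists (e', true).
by exists (e', false).
Qed.

Lemma arc_adjm e (o : arc) : o.1 != e -> adjG_minus t h e (otail o) (ohead o).
Proof.
move=> He; apply/existsP; exists o.1; rewrite He /=.
by case: o He => e' [] _ /=; rewrite !eqxx ?orbT.
Qed.

Lemma conn_bridge (o : arc) : connect (adjG_minus t h o.1) (ohead o) (otail o) = ~~ bridge t h o.1.
Proof.
rewrite /bridge negbK; case: o => e [] //=.
by rewrite (sym_connect_sym (adjm_sym e)).
Qed.

Lemma cwalk_nobridge s o : cwalk s -> uniq (map fst s) -> o \in s -> ~~ bridge t h o.1.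
Proof.
move=> Hc Hu Ho; have [s' [Hc' Hp]] := cwalk_rot Hc Ho.
have [Hw He] := cwalk_wk Hc'.
have Hu' : uniq (map fst (o :: s')) by rewrite -(perm_uniq (perm_map fst Hp)).
rewrite -conn_bridge -He; apply: reach_end => // o' Ho'; apply: connect1; apply: arc_adjm.
apply/eqP => Eq; move: Hu'; rewrite /= -Eq (map_f _ Ho') //.
Qed.

Lemma nobridge_cwalk (o : arc) : ~~ bridge t h o.1 ->
  exists s, [/\ cwalk (o :: s), uniq (map fst (o :: s)) & all (fun o' => o'.1 != o.1) s].
Proof.
rewrite -conn_bridge => /(connect_walk (P := fun o' : arc => o'.1 != o.1) (@adjm_arc o.1)).
case=> s [Hsw He Ha]; exists s; split => //.
  exact: cwalk_of_sw Hsw He _.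
rewrite /= (sw_uniq_fst Hsw) andbT; apply/mapP => [[o' Ho' Eq]].
by move/allP: Ha => /(_ _ Ho'); rewrite Eq eqxx.
Qed.


Lemma uniq_fst_inj (l : seq arc) o1 o2 : uniq (map fst l) -> o1 \in l -> o2 \in l -> o1.1 = o2.1 -> o1 = o2.
Proof.
elim: l => //= o l IH /andP[Hn Hu]; rewrite !inE => /orP[/eqP->|H1] /orP[/eqP->|H2] //.
- by move=> Eq; move: Hn; rewrite Eq (map_f _ H2).
- by move=> Eq; move: Hn; rewrite -Eq (map_f _ H1).
- exact: IH.
Qed.

Definition cov (D : {set arc}) e := ((e, true) \in D) || ((e, false) \in D).

Lemma cov_rev (D : {set arc}) o : o \notin D -> cov D o.1 -> orev o \in D.
Proof. by case: o => e [] /negbTE Hn; rewrite /cov /= Hn //= orbF. Qed.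

Lemma cov_arc (D : {set arc}) o : o \in D -> cov D o.1.
Proof. by case: o => e [] H; rewrite /cov H ?orbT. Qed.

Lemma SC_nobridge (D : {set arc}) o : strongly_connected t h D -> o \in D -> ~~ bridge t h o.1.
Proof.
move=> HS Ho; have [s [Hc _ Hu]] := arc_cycle HS Ho.
by apply: (cwalk_nobridge Hc Hu); rewrite inE eqxx.
Qed.

Lemma ear (D : {set arc}) r : strongly_connected t h D -> ~~ bridge t h r.1 -> ~~ cov D r.1 ->
  exists D1, [/\ strongly_connected t h D1, D \subset D1 & r \in D1].
Proof.
move=> HS Hb Hr; have [s [Hc Hu Ha]] := nobridge_cwalk Hb.
pose D1 := D :|: [set o | (o \in r :: s) && ~~ cov D o.1].
have HDD1 : D \subset D1 by apply: subsetUl.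
have Hr1 : r \in D1 by rewrite !inE eqxx Hr orbT.
exists D1; split => //.
apply: SC_crit.
  move=> e; apply/negP => /andP[]; rewrite !inE /=.
  case/orP => [H1|/andP[M1 C1]] /orP[H2|/andP[M2 C2]].
  - by move: (HS.1 e); rewrite H1 H2.
  - by move: C2; rewrite /cov /= H1.
  - by move: C1; rewrite /cov /= H2 orbT.
  - by have := uniq_fst_inj Hu M1 M2 erefl.
move=> o; rewrite !inE => /orP[Ho|/andP[Ho _]].
  by apply: (dirrel_mono HDD1); apply: SC_arc.
apply: (cwalk_reach Hc) => // o' Ho'.
case HD1 : (o' \in D1); first by apply: connect1; apply: dirrel_arc.
move: HD1; rewrite in_setU in_set Ho' /= => /norP[Hn /negbNE Hcv].
have := SC_arc HS (cov_rev Hn Hcv); rewrite otail_rev ohead_rev.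
exact: dirrel_mono.
Qed.

Lemma ext (D : {set arc}) : strongly_connected t h D -> exists D', in_SD t h D D'.
Proof.
pose U (D : {set arc}) := [set e | ~~ bridge t h e && ~~ cov D e].
move: {2}#|U D| (leqnn #|U D|) => n; elim: n D => [|n IH] D Hn HS.
  exists D; split => //; split; first exact: HS.1.
  move=> e; apply/idP/idP => [/orP[] H|Hb].
  - exact: (SC_nobridge (o := (e, true)) HS).
  - exact: (SC_nobridge (o := (e, false)) HS).
  - apply/negPn/negP => Hc.
    have : e \in U D by rewrite inE Hb Hc.
    by move: Hn; rewrite leqn0 cards_eq0 => /eqP ->; rewrite inE.
case: (set_0Vmem (U D)) => [E0|[e He]].
  exists D; split => //; split; first exact: HS.1.
  move=> e; apply/idP/idP => [/orP[] H|Hb].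
  - exact: (SC_nobridge (o := (e, true)) HS).
  - exact: (SC_nobridge (o := (e, false)) HS).
  - apply/negPn/negP => Hc.
    have : e \in U D by rewrite inE Hb Hc.
    by rewrite E0 inE.
move: (He); rewrite inE => /andP[Hb Hc].
have [D1 [HS1 Hsub Hr]] := ear (r := (e, true)) HS Hb Hc.
have HU : U D1 \proper U D.
  apply/properP; split.
    apply/subsetP => x; rewrite !inE => /andP[-> /=]; apply: contra.
    by case/orP => H; rewrite /cov (subsetP Hsub _ H) ?orbT.
  by exists e => //; rewrite inE /cov Hr /= andbF.
have [D' [H1 H2 H3]] := IH D1 (leq_trans (proper_card HU) Hn) HS1 .
by exists D'; split => //; apply: subset_trans H3.
Qed.

End Walks.


Local Open Scope ring_scope.

Section Real.
Variables (V E : finType) (t h : E -> V) (R : realFieldType).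
Notation arc := (E * bool)%type.
Notation otail := (Defs.otail t h).
Notation ohead := (Defs.ohead t h).
Notation vec := {ffun E -> R}.
Notation oval := (@oval E R).
Notation dot := (@dot E R).
Notation q := (@q E R).
Notation is_flow := (@is_flow V E t h R).
Notation xC := (@xC E R).
Notation cwalk := (cwalk t h).
Notation orev := (@orev E).

Definition sgn (o : arc) : R := if o.2 then 1 else -1.
Definition chR (s : seq arc) : vec := [ffun e => \sum_(o <- s | o.1 == e) sgn o].
Definition chi (s : seq arc) : {ffun E -> int} :=
  [ffun e => \sum_(o <- s | o.1 == e) (if o.2 then 1 else -1)].

Lemma chiE s : intc R (chi s) = chR s.
Proof.
apply/ffunP => e; rewrite !ffunE rmorph_sum; apply: eq_bigr => o _.
by rewrite /sgn; case: o.2; rewrite ?rmorphN rmorph1.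
Qed.

Lemma ovalE (x : vec) o : oval x o = sgn o * x o.1.
Proof. by rewrite /oval /sgn; case: o.2; rewrite ?mul1r ?mulN1r. Qed.

Lemma oval_rev (x : vec) o : oval x (orev o) = - oval x o.
Proof. by rewrite /oval /orev /=; case: o.2; rewrite ?opprK. Qed.

Lemma dotC (x y : vec) : dot x y = dot y x.
Proof. by apply: eq_bigr => e _; rewrite mulrC. Qed.

Lemma sum_ch (P : pred E) (F : E -> R) s :
  \sum_(e | P e) F e * chR s e = \sum_(o <- s | P o.1) F o.1 * sgn o.
Proof.
under eq_bigr => e _ do rewrite ffunE mulr_sumr.
rewrite (exchange_big_dep xpredT) //= [RHS]big_mkcond /=; apply: eq_bigr => o _.
case: ifP => HP.
  rewrite (bigD1 o.1) /=; last by rewrite HP eqxx.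
  rewrite big1 ?addr0 // => e /andP[/andP[_ /eqP Ee] Hne].
  by rewrite Ee eqxx in Hne.
by rewrite big1 // => e /andP[He /eqP Eo]; rewrite -Eo HP in He.
Qed.

Lemma dot_ch (x : vec) s : dot x (chR s) = \sum_(o <- s) oval x o.
Proof. by rewrite /Defs.dot sum_ch; apply: eq_bigr => o _; rewrite ovalE mulrC. Qed.

Lemma heads_perm s : cwalk s -> perm_eq (map ohead s) (map otail s).
Proof.
case: s => [//|o s] Hc; have [Hw He] := cwalk_wk Hc.
rewrite /= (otails_wk Hw) lastI; move: He; rewrite /wend => ->.
by rewrite perm_rcons.
Qed.

Lemma telescope (F : V -> R) s : cwalk s -> \sum_(o <- s) F (otail o) = \sum_(o <- s) F (ohead o).
Proof.
move=> Hc; rewrite -(big_map otail xpredT F) -(big_map ohead xpredT F).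
by apply: perm_big; rewrite perm_sym; apply: heads_perm.
Qed.

Lemma sum_ch1 (P : pred E) s : \sum_(e | P e) chR s e = \sum_(o <- s | P o.1) sgn o.
Proof.
have := sum_ch P (fun _ => 1) s; under eq_bigr do rewrite mul1r; move=> ->.
by apply: eq_bigr => o _; rewrite mul1r.
Qed.

Lemma flow_ch s : cwalk s -> is_flow (chR s).
Proof.
move=> Hc v; rewrite !sum_ch1 (big_mkcond (fun o => t o.1 == v)) (big_mkcond (fun o => h o.1 == v)) -sumrB /=.
have -> : \sum_(o <- s) ((if t o.1 == v then sgn o else 0) - (if h o.1 == v then sgn o else 0))
   = \sum_(o <- s) ((otail o == v)%:R - (ohead o == v)%:R : R).
  apply: eq_bigr => -[e b] _; rewrite /sgn /Defs.otail /Defs.ohead /=.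
  case: b; case: (t e == v); case: (h e == v) => /=;
  by rewrite ?subrr ?subr0 ?sub0r ?opprK ?opprB ?add0r ?addr0.
by rewrite sumrB (telescope (fun u => (u == v)%:R)) // subrr.
Qed.

Lemma ch_val s o : uniq (map fst s) -> o \in s -> chR s o.1 = sgn o.
Proof.
elim: s => //= o1 s IH /andP[Hn Hu]; rewrite inE ffunE big_cons => /orP[/eqP Eo|Ho].
  subst o1; rewrite eqxx big1_seq ?addr0 // => o' /andP[/eqP Ef Ho'].
  by move: Hn; rewrite -Ef (map_f _ Ho').
have -> : (o1.1 == o.1) = false.
  by apply/negP => /eqP Ef; move: Hn; rewrite Ef (map_f _ Ho).
by rewrite -(IH Hu Ho) ffunE.
Qed.

Lemma ch_val0 s e : e \notin map fst s -> chR s e = 0.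
Proof.
move=> He; rewrite ffunE big1_seq // => o /andP[/eqP Eo Ho].
by move: He; rewrite -Eo (map_f _ Ho).
Qed.

Lemma oval_ch s o : uniq (map fst s) -> o \in s -> oval (chR s) o = 1.
Proof. by move=> Hu Ho; rewrite ovalE (ch_val Hu Ho) /sgn; case: o.2 Ho; rewrite ?mulr1 ?mulrNN ?mul1r. Qed.

Lemma q_ch s : uniq (map fst s) -> q (chR s) = \sum_(o <- s) 1.
Proof.
move=> Hu; rewrite /Defs.q dot_ch big_seq [RHS]big_seq; apply: eq_bigr => o Ho.
exact: oval_ch.
Qed.

Lemma xC_ch s : uniq (map fst s) -> xC [set o in s] = chR s.
Proof.
move=> Hu; apply/ffunP => e; rewrite [LHS]ffunE !inE.
case: ifP => [H1|H1]; first by rewrite (ch_val (o := (e, true)) Hu H1).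
case: ifP => [H2|H2]; first by rewrite (ch_val (o := (e, false)) Hu H2).
rewrite ch_val0 //; apply/mapP => [[[e' b] Ho /= Ee]]; subst e'.
by case: b Ho => Ho; [rewrite Ho in H1|rewrite Ho in H2].
Qed.

End Real.


Section Minl.
Variable R : realFieldType.
Definition minl (l : seq R) : R := if l is x :: l' then foldr Num.min x l' else 0.

Lemma minl_aux (x : R) l : [/\ foldr Num.min x l <= x, (forall z, z \in l -> foldr Num.min x l <= z)
   & foldr Num.min x l \in x :: l].
Proof.
elim: l => [|y l [H1 H2 H3]] /=; first by split => //; rewrite inE eqxx.
split.
- by rewrite ge_min H1 orbT.
- move=> z; rewrite inE => /orP[/eqP ->|Hz]; first by rewrite ge_min lexx.
  by rewrite ge_min H2 ?orbT.
- rewrite /Num.min; case: ifP => _; first by rewrite !inE eqxx orbT.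
  by move: H3; rewrite !inE => /orP[->|->]; rewrite ?orbT.
Qed.

Lemma minl_le l z : z \in l -> minl l <= z.
Proof.
case: l => [//|x l]; rewrite inE => /orP[/eqP ->|Hz]; have [H1 H2 H3] := minl_aux x l => //.
exact: H2.
Qed.

Lemma minl_mem l : l != [::] -> minl l \in l.
Proof. by case: l => [//|x l] _; have [H1 H2 H3] := minl_aux x l. Qed.
End Minl.

Section Pot.
Variables (V E : finType) (t h : E -> V) (R : realFieldType).
Notation arc := (E * bool)%type.
Notation otail := (Defs.otail t h).
Notation ohead := (Defs.ohead t h).
Notation cwalk := (cwalk t h).
Notation sw := (sw t h).
Notation wend := (wend t h).
Notation wk := (wk t h).

Lemma circ_of s : cwalk s -> uniq (map fst s) -> is_circuit t h [set o in s].
Proof. by case/and3P => Hn Hc Hu Hf; exists s; split. Qed.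

Lemma circ_walk C : is_circuit t h C -> exists s, [/\ cwalk s, uniq (map fst s) & C = [set o in s]].
Proof. by case=> s [Hn Hf Hu Hc ->]; exists s; split => //; rewrite /cwalk Hn Hc Hu. Qed.

Fixpoint allseq n : seq (seq arc) :=
  if n is n'.+1 then [::] :: [seq o :: s | o <- enum {: arc}, s <- allseq n'] else [:: [::]].

Lemma mem_allseq n s : (size s <= n)%N -> s \in allseq n.
Proof.
elim: n s => [|n IH] [|o s] Hs //=.
all: try by rewrite inE.
rewrite inE; apply/orP; right.
apply: (allpairs_f (fun o s => o :: s)); first by rewrite mem_enum.
exact: IH.
Qed.

Lemma sw_size v s : sw v s -> (size s <= #|V|)%N.
Proof.
case/andP => _ Hu; have := card_uniqP Hu; rewrite /= size_map => Hc.
by apply: ltnW; rewrite -Hc max_card.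
Qed.

Lemma split_at v s x : x \in v :: map ohead s -> exists s1 s2, s = s1 ++ s2 /\ wend v s1 = x.
Proof.
elim: s v => [|o s IH] v.
  by move=> Hx; exists [::], [::]; split => //=; move: Hx; rewrite /= inE => /eqP.
rewrite inE; case/orP => [/eqP ->|Hx]; first by exists [::], (o :: s).
have [s1 [s2 [-> He]]] := IH (ohead o) Hx.
by exists (o :: s1), s2.
Qed.

Lemma potential (A : pred arc) (c : arc -> R) :
  (forall s, cwalk s -> all A s -> 0 <= \sum_(o <- s) c o) ->
  exists p : V -> R, forall o, A o -> p (ohead o) <= p (otail o) + c o.
Proof.
move=> Hcyc.
pose cands := [seq (v, s) | v <- enum V, s <- allseq #|V|].
pose ok w (vs : V * seq arc) := [&& sw vs.1 vs.2, all A vs.2 & wend vs.1 vs.2 == w].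
pose cst (s : seq arc) := \sum_(o <- s) c o.
pose p w := minl [seq cst vs.2 | vs <- cands & ok w vs].
have Hin : forall v s, sw v s -> (v, s) \in cands.
  move=> v s Hs; apply: allpairs_f; first by rewrite mem_enum.
  exact: mem_allseq (sw_size Hs).
have p_le : forall w v s, sw v s -> all A s -> wend v s = w -> p w <= cst s.
  move=> w v s Hs Ha He; apply: minl_le; apply/mapP; exists (v, s) => //.
  by rewrite mem_filter /ok /= Hs Ha He eqxx Hin.
have p_mem : forall w, exists v s, [/\ sw v s, all A s, wend v s = w & p w = cst s].
  move=> w; have : p w \in [seq cst vs.2 | vs <- cands & ok w vs].
    apply: minl_mem; apply/eqP => E0.
    have : cst [::] \in [seq cst vs.2 | vs <- cands & ok w vs].
      have Hsw0 : sw w [::] by [].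
      apply/mapP; exists (w, [::]) => //; rewrite mem_filter Hin // andbT /ok /= eqxx.
      by [].
    by rewrite E0.
  case/mapP => [[v s]]; rewrite mem_filter /ok /= => /andP[/and3P[Hs Ha /eqP He] _] ->.
  by exists v, s.
exists p => o Ho.
have [v [s [Hs Ha He ->]]] := p_mem (otail o).
case Hm : (ohead o \in v :: map ohead s).
  have [s1 [s2 [Es E1]]] := split_at Hm.
  move: Hs Ha; rewrite Es /sw wk_cat all_cat map_cat -cat_cons cat_uniq => /andP[/andP[Hw1 Hw2]].
  case/and3P => Hu1 Hnh Hu2 /andP[Ha1 Ha2].
  have Hsw2 : sw (ohead o) s2.
    rewrite /sw -E1 Hw2 /= Hu2 andbT; apply/negP => Hl.
    move/hasP: Hnh; apply; exists (wend v s1) => //.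
    by rewrite /wend; apply: mem_last.
  have Hc : cwalk (o :: s2).
    apply: cwalk_of_sw Hsw2 _ erefl.
    by rewrite -He Es wend_cat E1.
  have := Hcyc _ Hc; rewrite /= Ho Ha2 => /(_ erefl); rewrite big_cons => H0.
  apply: le_trans (p_le _ _ _ _ Ha1 E1) _.
  - by rewrite /sw Hw1 Hu1.
  by rewrite /cst big_cat /= -addrA lerDl addrC.
have Hsw : sw v (rcons s o).
  rewrite /sw wk_rcons He eqxx andbT; case/andP: Hs => -> Hu.
  by rewrite map_rcons -rcons_cons rcons_uniq Hm Hu.
apply: le_trans (p_le _ _ _ Hsw _ _) _.
- by rewrite all_rcons Ho Ha.
- by rewrite wend_rcons.
by rewrite /cst -cats1 big_cat big_seq1.
Qed.

End Pot.


Section VOs.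
Variables (V E : finType) (t h : E -> V) (R : realFieldType).
Notation arc := (E * bool)%type.
Notation otail := (Defs.otail t h).
Notation ohead := (Defs.ohead t h).
Notation vec := {ffun E -> R}.
Notation oval := (@oval E R).
Notation dot := (@dot E R).
Notation q := (@q E R).
Notation is_flow := (@is_flow V E t h R).
Notation xC := (@xC E R).
Notation cwalk := (cwalk t h).
Notation orev := (@orev E).
Notation chR := (@chR E R).
Notation VO := (@VO V E t h R).

Lemma q_sub (x y : vec) : q (subc x y) = q x - 2 * dot x y + q y.
Proof.
rewrite /Defs.q /Defs.dot mulr_sumr -sumrB -big_split /=; apply: eq_bigr => e _.
rewrite ffunE; ring.
Qed.

Lemma VO_iff x : VO x <-> is_flow x /\ forall m, is_flow (intc R m) -> 2 * dot x (intc R m) <= q (intc R m).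
Proof.
split => -[Hf H]; split => // m Hm; have := H m Hm; rewrite q_sub; lra.
Qed.

Lemma VO_circ x C : VO x -> is_circuit t h C -> 2 * dot x (xC C) <= q (xC C).
Proof.
move=> /VO_iff [_ H] /circ_walk [s [Hc Hu ->]]; rewrite xC_ch // -chiE.
by apply: H; rewrite chiE; apply: flow_ch.
Qed.

Lemma pot_of_circ (x : vec) : (forall C, is_circuit t h C -> 2 * dot x (xC C) <= q (xC C)) ->
  exists p : V -> R, forall o, p (ohead o) <= p (otail o) + (1 - 2 * oval x o).
Proof.
move=> HC; have := @potential V E t h R xpredT (fun o => 1 - 2 * oval x o).
case=> [s Hc _|p Hp]; last by exists p => o; apply: Hp.
case: (cwalk_cases Hc) => [Hu|[o ->]].
  have := HC _ (circ_of Hc Hu); rewrite xC_ch // dot_ch q_ch // sumrB -mulr_sumr.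
  by rewrite subr_ge0.
by rewrite !big_cons big_nil oval_rev; lra.
Qed.

Lemma flow_pot (f : vec) (p : V -> R) : is_flow f -> \sum_e f e * (p (h e) - p (t e)) = 0.
Proof.
move=> Hf.
have Hpart : forall g : E -> V, \sum_e f e * p (g e) = \sum_v p v * \sum_(e | g e == v) f e.
  move=> g; rewrite (partition_big g xpredT) //=; apply: eq_bigr => v _.
  by rewrite mulr_sumr; apply: eq_bigr => e /eqP <-; rewrite mulrC.
under eq_bigr do rewrite mulrBr.
rewrite sumrB !Hpart -sumrB big1 // => v _.
by rewrite -mulrBr -opprB (Hf v) oppr0 mulr0.
Qed.

Lemma int_bound (g : R) (k : int) : -1 <= g <= 1 -> g * k%:~R <= k%:~R * k%:~R.
Proof.
case/andP => H1 H2.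
have : (k = 0) \/ (1 <= k)%R \/ (k <= -1)%R by lia.
case=> [->|[Hk|Hk]]; first by rewrite mulr0 mulr0.
  have : (1 : R) <= k%:~R by rewrite -(ler_int R) in Hk.
  move=> Hk'; nra.
have : k%:~R <= (-1 : R) by rewrite -(ler_int R) in Hk; rewrite rmorphN rmorph1 in Hk.
move=> Hk'; nra.
Qed.

Lemma pot_VO (x : vec) p : is_flow x ->
  (forall o, p (ohead o) <= p (otail o) + (1 - 2 * oval x o)) -> VO x.
Proof.
move=> Hf Hp; apply/VO_iff; split => // m Hm.
pose mm := intc R m.
pose g e := 2 * x e + p (h e) - p (t e).
have -> : 2 * dot x mm = \sum_e g e * mm e - \sum_e mm e * (p (h e) - p (t e)).
  rewrite /Defs.dot mulr_sumr -sumrB; apply: eq_bigr => e _; rewrite /g; ring.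
rewrite flow_pot // subr0 /Defs.q /Defs.dot; apply: ler_sum => e _.
rewrite /mm ffunE; apply: int_bound.
have := Hp (e, true); have := Hp (e, false); rewrite /g /Defs.oval /Defs.otail /Defs.ohead /=.
move=> H1 H2; apply/andP; split; lra.
Qed.

Lemma circ_VO (x : vec) : is_flow x -> (forall C, is_circuit t h C -> 2 * dot x (xC C) <= q (xC C)) -> VO x.
Proof. by move=> Hf /pot_of_circ [p Hp]; apply: pot_VO Hp. Qed.

End VOs.


Section VD.
Variables (V E : finType) (t h : E -> V) (R : realFieldType).
Notation arc := (E * bool)%type.
Notation otail := (Defs.otail t h).
Notation ohead := (Defs.ohead t h).
Notation vec := {ffun E -> R}.
Notation oval := (@oval E R).
Notation dot := (@dot E R).
Notation q := (@q E R).
Notation is_flow := (@is_flow V E t h R).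
Notation xC := (@xC E R).
Notation cwalk := (cwalk t h).
Notation orev := (@orev E).
Notation chR := (@chR E R).
Notation VO := (@VO V E t h R).

Lemma psum_seq0 (l : seq arc) (F : arc -> R) : (forall x, x \in l -> 0 <= F x) ->
  \sum_(x <- l) F x = 0 -> forall x, x \in l -> F x = 0.
Proof.
elim: l => //= a l IH Hp; rewrite big_cons => H0 x.
have Ha : 0 <= F a by apply: Hp; rewrite inE eqxx.
have Hl : 0 <= \sum_(y <- l) F y.
  by rewrite big_seq_cond; apply: sumr_ge0 => y /andP[Hy _]; apply: Hp; rewrite inE Hy orbT.
have := paddr_eq0 Ha Hl; rewrite H0 eqxx => /esym /andP[/eqP H1 /eqP H2].
rewrite inE => /orP[/eqP ->//|Hx].
apply: IH => //.
by move=> y Hy; apply: Hp; rewrite inE Hy orbT.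
Qed.

Lemma flow_bridge (f : vec) e : is_flow f -> bridge t h e -> f e = 0.
Proof.
move=> Hf Hb.
pose S := [set v | connect (adjG_minus t h e) (t e) v].
have HS : forall e', e' != e -> (t e' \in S) = (h e' \in S).
  move=> e' He'; rewrite !inE; apply/idP/idP => H.
    exact: connect_trans H (connect1 (arc_adjm t h (o := (e', true)) He')).
  exact: connect_trans H (connect1 (arc_adjm t h (o := (e', false)) He')).
have Ht : t e \in S by rewrite inE connect0.
have Hh : h e \notin S by rewrite inE.
have Hsum : forall g : E -> V, \sum_(v in S) \sum_(e' | g e' == v) f e' = \sum_(e' | g e' \in S) f e'.
  move=> g; rewrite (partition_big g (mem S)) //=; apply: eq_bigr => v Hv.
  by apply: eq_bigl => i; case: eqP => [->|]; rewrite ?Hv ?andbF.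
have H0 : \sum_(e' | t e' \in S) f e' - \sum_(e' | h e' \in S) f e' = 0.
  by rewrite -(Hsum t) -(Hsum h) -sumrB big1 // => v _; apply: Hf.
move: H0; rewrite (bigD1 e) //=.
rewrite [X in _ - X](eq_bigl (fun e' => (t e' \in S) && (e' != e))); first by rewrite addrK.
move=> e' /=; case: (eqVneq e' e) => [->|Hne]; first by rewrite (negbTE Hh) andbF.
by rewrite HS // andbT.
Qed.

Lemma Lpot (D : {set arc}) (z : vec) : strongly_connected t h D ->
  (forall s, cwalk s -> all (mem D) s -> \sum_(o <- s) oval z o = 0) ->
  exists p : V -> R, forall o, o \in D -> oval z o = p (ohead o) - p (otail o).
Proof.
move=> HS Hz.
have [p Hp] : exists p : V -> R, forall o, o \in D -> p (ohead o) <= p (otail o) + - oval z o.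
  apply: (@potential V E t h R (mem D) (fun o => - oval z o)) => s Hc Ha.
  by rewrite sumrN (Hz s Hc Ha) oppr0.
exists (fun v => - p v) => o Ho.
have [s [Hc Ha _]] := arc_cycle HS Ho.
have HF : \sum_(o' <- o :: s) (p (otail o') - p (ohead o') - oval z o') = 0.
  by rewrite !sumrB (telescope _ Hc) subrr sub0r (Hz _ Hc Ha) oppr0.
have Hnn : forall x, x \in o :: s -> 0 <= p (otail x) - p (ohead x) - oval z x.
  by move=> o' Ho'; have := Hp o' (allP Ha _ Ho'); lra.
have := psum_seq0 Hnn HF (x := o); rewrite inE eqxx => /(_ erefl) H; lra.
Qed.

Lemma xC_orient (D : {set arc}) o : is_orientation D -> o \in D -> oval (xC D) o = 1.
Proof.
move=> HO; case: o => e [] Ho; rewrite /Defs.oval /Defs.xC ffunE /= Ho //.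
by move: (HO e); rewrite Ho andbT => /negbTE ->; rewrite opprK.
Qed.

Lemma xC_bound (C : {set arc}) e : -1 <= xC C e <= 1.
Proof. by rewrite ffunE; case: ifP => _; [|case: ifP => _]; apply/andP; split; lra. Qed.

Lemma vD_orth D' v : strongly_connected t h D' -> orientation_of_Gcirc t h D' -> is_vD t h D' v ->
  forall f, is_flow f -> dot (xC D') f = 2 * dot v f.
Proof.
move=> HS HO [Hv HvC] f Hf.
pose z : vec := [ffun e => xC D' e - 2 * v e].
have Hoval : forall o, oval z o = oval (xC D') o - 2 * oval v o.
  by move=> o; rewrite /Defs.oval ffunE; case: o.2 => //; ring.
have [p Hp] : exists p : V -> R, forall o, o \in D' -> oval z o = p (ohead o) - p (otail o).
  apply: (Lpot HS) => s Hc Ha.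
  have Hu := orient_uniq HS.1 Hc Ha.
  have HC := circ_of Hc Hu.
  have Hsub : [set o in s] \subset D'.
    by apply/subsetP => o; rewrite inE => Ho; exact: (allP Ha).
  have := HvC _ HC Hsub; rewrite xC_ch // q_ch // dot_ch => HH.
  rewrite (eq_big_seq (fun o => 1 - 2 * oval v o)); last first.
    by move=> o Ho; rewrite Hoval xC_orient //; [exact: HS.1|exact: (allP Ha)].
  by rewrite sumrB -mulr_sumr HH subrr.
have Hz : \sum_e z e * f e = 0.
  rewrite -[RHS](flow_pot p Hf); apply: eq_bigr => e _.
  case Hb: (bridge t h e); first by rewrite (flow_bridge Hf Hb) !mulr0 mul0r.
  have := HO.2 e; rewrite Hb /= => /orP[H1|H2].
    by have := Hp _ H1; rewrite /Defs.oval /= => ->; rewrite mulrC.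
  have := Hp _ H2; rewrite /Defs.oval /= => H; rewrite mulrC; congr (_ * _); lra.
move: Hz; rewrite /Defs.dot; under eq_bigr do rewrite ffunE mulrBl -mulrA.
by rewrite sumrB -mulr_sumr; lra.
Qed.

Definition vadd (a b : vec) : vec := [ffun e => a e + b e].
Definition vsc (k : R) (a : vec) : vec := [ffun e => k * a e].
Definition vz : vec := [ffun e => 0].
Definition spn (l : seq vec) (w : vec) := forall P : vec -> Prop, P vz ->
  (forall a b, P a -> P b -> P (vadd a b)) -> (forall k a, P a -> P (vsc k a)) ->
  (forall u, u \in l -> P u) -> P w.

Lemma dot_add (y a b : vec) : dot y (vadd a b) = dot y a + dot y b.
Proof. by rewrite /Defs.dot -big_split; apply: eq_bigr => e _; rewrite ffunE mulrDr. Qed.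
Lemma dot_sc (y a : vec) k : dot y (vsc k a) = k * dot y a.
Proof. by rewrite /Defs.dot mulr_sumr; apply: eq_bigr => e _; rewrite ffunE; ring. Qed.
Lemma dot_z (y : vec) : dot y vz = 0.
Proof. by rewrite /Defs.dot big1 // => e _; rewrite ffunE mulr0. Qed.
Lemma dot_subl (y a u : vec) : dot (subc y a) u = dot y u - dot a u.
Proof. by rewrite /Defs.dot -sumrB; apply: eq_bigr => e _; rewrite ffunE mulrBl. Qed.

Lemma spn_orth l y w : (forall u, u \in l -> dot y u = 0) -> spn l w -> dot y w = 0.
Proof.
move=> Hl Hw; apply: (Hw (fun w => dot y w = 0)).
- exact: dot_z.
- by move=> a b Ha Hb; rewrite dot_add Ha Hb addr0.
- by move=> k a Ha; rewrite dot_sc Ha mulr0.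
- exact: Hl.
Qed.

Lemma spn_flow l w : (forall u, u \in l -> is_flow u) -> spn l w -> is_flow w.
Proof.
move=> Hl Hw; apply: (Hw is_flow).
- by move=> v; rewrite !big1 ?subrr // => e _; rewrite ffunE.
- move=> a b Ha Hb v; under eq_bigr do rewrite ffunE.
  under [X in _ - X]eq_bigr do rewrite ffunE.
  rewrite !big_split /=; have := Ha v; have := Hb v; lra.
- move=> k a Ha v; under eq_bigr do rewrite ffunE.
  under [X in _ - X]eq_bigr do rewrite ffunE.
  by rewrite -!mulr_sumr -mulrBr Ha mulr0.
- exact: Hl.
Qed.

Lemma spn_mono l l' w : {subset l <= l'} -> spn l w -> spn l' w.
Proof. by move=> Hs Hw P P0 PA PS Pl; apply: Hw => // u Hu; apply: (Pl); apply: Hs. Qed.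

Lemma GS (l : seq vec) (y : vec) : exists w, spn l w /\ forall u, u \in l -> dot (subc y w) u = 0.
Proof.
elim: l y => [|u l IH] y.
  by exists vz; split => // P P0 _ _ _.
have [w' [Hw' Ho']] := IH y; have [wu [Hwu Hou]] := IH u.
pose r := subc u wu.
have Hrwu : dot r wu = 0 := spn_orth Hou Hwu.
have Hyw : dot (subc y w') wu = 0 := spn_orth Ho' Hwu.
have Hsub : {subset l <= u :: l} by move=> x Hx; rewrite inE Hx orbT.
have Hsplit : forall X, dot X u = dot X r + dot X wu.
  by move=> X; rewrite /Defs.dot -big_split; apply: eq_bigr => e _; rewrite /r /subc ffunE /= -mulrDr subrK.
case: (eqVneq (dot r r) 0) => Hrr.
  have Hr0 : forall e, r e = 0.
    move=> e; have := @psumr_eq0P _ _ xpredT (fun e => r e * r e).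
    by move=> /(_ (fun e _ => sqr_ge0 (r e)) Hrr e erefl) /eqP; rewrite mulf_eq0 orbb => /eqP.
  have Huw : u = wu by apply/ffunP => e; have := Hr0 e; rewrite ffunE => /eqP; rewrite subr_eq0 => /eqP.
  exists w'; split; first exact: spn_mono Hw'.
  move=> u'; rewrite inE => /orP[/eqP ->|]; last exact: Ho'.
  by rewrite Huw.
pose k := dot (subc y w') r / dot r r.
exists (vadd w' (vsc k r)); split.
  move=> P P0 PA PS Pl; apply: (PA).
    by apply: (Hw' P P0 PA PS) => x Hx; apply: (Pl); apply: Hsub.
  apply: (PS).
  have -> : r = vadd u (vsc (-1) wu) by apply/ffunP => e; rewrite /r /subc !ffunE; ring.
  apply: (PA); first by apply: (Pl); rewrite inE eqxx.
  by apply: (PS); apply: (Hwu P P0 PA PS) => x Hx; apply: (Pl); apply: Hsub.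
have Hlin : forall X, dot (subc y (vadd w' (vsc k r))) X = dot (subc y w') X - k * dot r X.
  by move=> X; rewrite /Defs.dot mulr_sumr -sumrB; apply: eq_bigr => e _; rewrite !ffunE; ring.
move=> u'; rewrite inE Hlin => /orP[/eqP ->|Hu'].
  rewrite Hsplit Hyw addr0 Hsplit Hrwu addr0 /k divfK //; exact: subrr.
by rewrite (Ho' _ Hu') Hou // mulr0 subrr.
Qed.

End VD.


Section VD2.
Variables (V E : finType) (t h : E -> V) (R : realFieldType).
Notation arc := (E * bool)%type.
Notation otail := (Defs.otail t h).
Notation ohead := (Defs.ohead t h).
Notation vec := {ffun E -> R}.
Notation oval := (@oval E R).
Notation dot := (@dot E R).
Notation q := (@q E R).
Notation is_flow := (@is_flow V E t h R).
Notation xC := (@xC E R).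
Notation cwalk := (cwalk t h).
Notation orev := (@orev E).
Notation chR := (@chR E R).
Notation VO := (@VO V E t h R).

Definition fv (v : V) : vec := [ffun e => (t e == v)%:R - (h e == v)%:R].

Lemma flow_dot (x : vec) : is_flow x <-> forall v, dot x (fv v) = 0.
Proof.
have E1 : forall v, dot x (fv v) = \sum_(e | t e == v) x e - \sum_(e | h e == v) x e.
  move=> v; rewrite /Defs.dot (big_mkcond (fun e => t e == v)) (big_mkcond (fun e => h e == v)) -sumrB.
  apply: eq_bigr => e _; rewrite ffunE mulrBr.
  by case: (t e == v); case: (h e == v); rewrite /= ?mulr1 ?mulr0.
by split => H v; [rewrite E1; apply: H|rewrite -E1; apply: H].
Qed.

Lemma dot_scl (a u : vec) k : dot (vsc k a) u = k * dot a u.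
Proof. by rewrite /Defs.dot mulr_sumr; apply: eq_bigr => e _; rewrite ffunE mulrA. Qed.

Lemma flow_xC C : is_circuit t h C -> is_flow (xC C).
Proof. by case/circ_walk => s [Hc Hu ->]; rewrite xC_ch //; apply: flow_ch. Qed.

Lemma q0 (d : vec) : dot d d = 0 -> forall e, d e = 0.
Proof.
move=> Hd e; have := @psumr_eq0P _ _ xpredT (fun e => d e * d e).
by move=> /(_ (fun e _ => sqr_ge0 (d e)) Hd e erefl) /eqP; rewrite mulf_eq0 orbb => /eqP.
Qed.

Lemma vD_exists D' : is_orientation D' -> exists v : vec, is_vD t h D' v.
Proof.
move=> HO.
pose cl := enum [set C : {set arc} | pb (is_circuit t h C) && (C \subset D')].
pose l := map xC cl.
have [w [Hw Ho]] := GS l (vsc (1/2) (xC D')).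
exists w; split.
  apply: (spn_flow _ Hw) => u /mapP [C HC ->]; move: HC; rewrite mem_enum inE.
  by case/andP => /pbP Hc _; apply: flow_xC.
move=> C HC Hsub.
have Hin : xC C \in l by apply: map_f; rewrite mem_enum inE Hsub andbT; apply/pbP.
have := Ho _ Hin; rewrite dot_subl dot_scl.
have [s [Hc Hu Ec]] := circ_walk HC; rewrite Ec xC_ch // dot_ch q_ch //.
rewrite (eq_big_seq (fun _ => 1)); last first.
  by move=> o Ho'; apply: xC_orient => //; apply: (subsetP Hsub); rewrite Ec inE.
move=> H; lra.
Qed.

Lemma vD_unique D' (v1 v2 : vec) : strongly_connected t h D' -> orientation_of_Gcirc t h D' ->
  is_vD t h D' v1 -> is_vD t h D' v2 -> v1 = v2.
Proof.
move=> HS HO H1 H2; pose d := subc v1 v2.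
have Hd : is_flow d.
  apply/flow_dot => v; rewrite /d dot_subl.
  by have /flow_dot -> := H1.1; have /flow_dot -> := H2.1; rewrite subrr.
have := vD_orth HS HO H1 Hd; rewrite (vD_orth HS HO H2 Hd) => Heq.
have Hdd : dot d d = 0 by rewrite {1}/d dot_subl; lra.
by apply/ffunP => e; have := q0 Hdd e; rewrite /d ffunE => /eqP; rewrite subr_eq0 => /eqP.
Qed.

Lemma vD_VO D' (v : vec) : strongly_connected t h D' -> orientation_of_Gcirc t h D' -> is_vD t h D' v -> VO v.
Proof.
move=> HS HO Hv; apply/VO_iff; split; first exact: Hv.1.
move=> m Hm; rewrite -(vD_orth HS HO Hv Hm) /Defs.dot /Defs.q /Defs.dot.
apply: ler_sum => e _; move: (int_bound (m e) (xC_bound R D' e)); by rewrite /intc !ffunE.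
Qed.

Lemma dot_comb n (p : 'I_n -> vec) (w : 'I_n -> R) (x u : vec) :
  (forall e, x e = \sum_i w i * p i e) -> dot x u = \sum_i w i * dot (p i) u.
Proof.
move=> Hx; rewrite /Defs.dot; under eq_bigr do rewrite Hx mulr_suml.
rewrite exchange_big; apply: eq_bigr => i _; rewrite mulr_sumr; apply: eq_bigr => e _.
by rewrite mulrA.
Qed.

Lemma conv_dot (P : vec -> Prop) x u c : conv P x -> (forall y, P y -> dot y u = c) -> dot x u = c.
Proof.
case=> n [p [w [HP Hw Hs Hx]]] Hc; rewrite (dot_comb _ Hx).
under eq_bigr do rewrite Hc //. by rewrite -mulr_suml Hs mul1r.
Qed.

Lemma conv_flow (P : vec -> Prop) x : (forall y, P y -> is_flow y) -> conv P x -> is_flow x.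
Proof.
move=> HP Hx; apply/flow_dot => v; apply: (conv_dot Hx) => y Hy.
by have /flow_dot := HP y Hy; apply.
Qed.

Lemma conv_VO (P : vec -> Prop) x : (forall y, P y -> VO y) -> conv P x -> VO x.
Proof.
move=> HP Hx; apply/VO_iff; split.
  by apply: (conv_flow _ Hx) => y /HP /VO_iff [].
move=> m Hm; case: Hx => n [p [w [HPp Hw Hs Hx]]].
rewrite (dot_comb _ Hx) mulr_sumr.
apply: le_trans (_ : \sum_i w i * q (intc R m) <= _).
  apply: ler_sum => i _; rewrite mulrCA; apply: ler_wpM2l => //.
  by have /VO_iff [_ H] := HP _ (HPp i); apply: H.
by rewrite -mulr_suml Hs mul1r.
Qed.

Lemma conv_pt (P : vec -> Prop) x : P x -> conv P x.
Proof.
move=> Hx; exists 1%N, (fun _ => x), (fun _ => 1); split => //.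
- by rewrite big_ord1.
- by move=> e; rewrite big_ord1 mul1r.
Qed.

Lemma split_lshift m n (j : 'I_m) : split (lshift n j) = inl j.
Proof. exact: (@unsplitK m n (inl j)). Qed.
Lemma split_rshift m n (j : 'I_n) : split (rshift m j) = inr j.
Proof. exact: (@unsplitK m n (inr j)). Qed.

Lemma conv_comb (P : vec -> Prop) a b k : conv P a -> conv P b -> 0 <= k -> k <= 1 ->
  conv P [ffun e => k * a e + (1 - k) * b e].
Proof.
case=> n1 [p1 [w1 [HP1 Hw1 Hs1 Hx1]]] [n2 [p2 [w2 [HP2 Hw2 Hs2 Hx2]]]] Hk0 Hk1.
pose p (i : 'I_(n1 + n2)) := match split i with inl j => p1 j | inr j => p2 j end.
pose w (i : 'I_(n1 + n2)) := match split i with inl j => k * w1 j | inr j => (1 - k) * w2 j end.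
exists (n1 + n2)%N, p, w; split.
- by move=> i; rewrite /p; case: split.
- move=> i; rewrite /w; case: split => j; apply: mulr_ge0 => //; lra.
- have L1 : \sum_(i < n1) w (lshift n2 i) = \sum_(i < n1) k * w1 i.
    by apply: eq_bigr => i _; rewrite /w split_lshift.
  have L2 : \sum_(i < n2) w (rshift n1 i) = \sum_(i < n2) (1 - k) * w2 i.
    by apply: eq_bigr => i _; rewrite /w split_rshift.
  by rewrite big_split_ord /= L1 L2 -!mulr_sumr Hs1 Hs2; ring.
- move=> e; rewrite ffunE big_split_ord /=.
  have L1 : \sum_(i < n1) w (lshift n2 i) * p (lshift n2 i) e = k * \sum_(i < n1) w1 i * p1 i e.
    by rewrite mulr_sumr; apply: eq_bigr => i _; rewrite /w /p split_lshift mulrA.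
  have L2 : \sum_(i < n2) w (rshift n1 i) * p (rshift n1 i) e = (1 - k) * \sum_(i < n2) w2 i * p2 i e.
    by rewrite mulr_sumr; apply: eq_bigr => i _; rewrite /w /p split_rshift mulrA.
  by rewrite L1 L2 Hx1 Hx2.
Qed.

End VD2.


Section Pos.
Variables (V E : finType) (t h : E -> V) (R : realFieldType).
Notation arc := (E * bool)%type.
Notation otail := (Defs.otail t h).
Notation ohead := (Defs.ohead t h).
Notation vec := {ffun E -> R}.
Notation oval := (@oval E R).
Notation dot := (@dot E R).
Notation q := (@q E R).
Notation is_flow := (@is_flow V E t h R).
Notation xC := (@xC E R).
Notation cwalk := (cwalk t h).
Notation orev := (@orev E).
Notation chR := (@chR E R).
Notation VO := (@VO V E t h R).

Lemma flow_arc (x : vec) v : is_flow x -> \sum_(o : arc | otail o == v) oval x o = 0.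
Proof.
move=> Hf.
have -> : \sum_(o : arc | otail o == v) oval x o =
    \sum_e ((if t e == v then x e else 0) + (if h e == v then - x e else 0)).
  rewrite big_mkcond -(pair_big xpredT xpredT (fun e b => if otail (e, b) == v then oval x (e, b) else 0)) /=.
  by apply: eq_big => // e _; rewrite big_bool.
rewrite big_split /= -(big_mkcond (fun e => t e == v)).
have -> : \sum_e (if h e == v then - x e else 0) = - \sum_(e | h e == v) x e.
  by rewrite -sumrN [RHS]big_mkcond; apply: eq_bigr => e _; case: ifP; rewrite ?oppr0.
exact: Hf.
Qed.

Lemma pos_circ (d : vec) e0 : is_flow d -> d e0 != 0 -> exists C, is_circuit t h C /\ 0 < dot d (xC C).
Proof.
move=> Hf Hd0.
pose A := [pred o : arc | 0 < oval d o].
suff [s [Hc Ha]] : exists s, cwalk s /\ all A s.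
  have Hu : uniq (map fst s).
    case: (cwalk_cases Hc) => // -[o Es]; move: Ha; rewrite Es /= andbT /A /= oval_rev.
    by case/andP => H1; rewrite oppr_gt0 => H2; move: (lt_trans H1 H2); rewrite ltxx.
  exists [set o in s]; split; first exact: circ_of.
  rewrite xC_ch // dot_ch; case: s Hc Ha {Hu} => [//|o s] _ /= /andP[Ho Ha].
  rewrite big_cons; apply: ltr_wpDr; last by [].
  by rewrite big_seq_cond; apply: sumr_ge0 => o' /andP[Ho' _]; move/allP: Ha => /(_ o' Ho'); rewrite /A /= => /ltW.
apply: NNPP => Hno.
have [p Hp] : exists p : V -> R, forall o, A o -> p (ohead o) <= p (otail o) + -1.
  apply: (@potential V E t h R A (fun _ => -1)) => s Hc Ha.
  by exfalso; apply: Hno; exists s.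
pose la := [seq o <- enum {: arc} | A o].
pose m := minl [seq p (ohead o) | o <- la].
have Hm : forall o, A o -> m <= p (ohead o).
  by move=> o Ho; apply: minl_le; apply: map_f; rewrite mem_filter Ho mem_enum.
pose o0 : arc := if 0 < d e0 then (e0, true) else (e0, false).
have Ho0 : A o0.
  rewrite /o0; case Hp0: (0 < d e0); rewrite /A /= /Defs.oval //=.
  by rewrite oppr_gt0 lt_neqAle Hd0 andTb leNgt Hp0.
have [os Hos Eos] : exists2 os, A os & m = p (ohead os).
  have : m \in [seq p (ohead o) | o <- la].
    apply: minl_mem; apply/eqP => Hnil.
    have : p (ohead o0) \in [seq p (ohead o) | o <- la] by apply: map_f; rewrite mem_filter Ho0 mem_enum.
    by rewrite Hnil.
  case/mapP => o; rewrite mem_filter => /andP[Ho _] ->; by exists o.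
pose v := ohead os.
have Hsum := flow_arc v Hf.
have Hrev : otail (orev os) == v by rewrite otail_rev.
have Hneg : oval d (orev os) < 0 by rewrite oval_rev oppr_lt0.
have [o' Ho'v Ho'A] : exists2 o', otail o' == v & A o'.
  apply: NNPP => Hn.
  have Hle : forall o, (otail o == v) && (o != orev os) -> oval d o <= 0.
    move=> o /andP[Hov _]; rewrite leNgt; apply/negP => Hpos; apply: Hn; by exists o.
  move: Hsum; rewrite (bigD1 (orev os)) //=.
  have : \sum_(o | (otail o == v) && (o != orev os)) oval d o <= 0 by apply: sumr_le0.
  move=> H1 H2; lra.
have := Hp _ Ho'A; have := Hm _ Ho'A; rewrite (eqP Ho'v) -/v -Eos /v; lra.
Qed.

Definition tightb (x : vec) (C : {set arc}) := 2 * dot x (xC C) == q (xC C).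
Definition circb (C : {set arc}) := pb (is_circuit t h C).

Lemma dot_movel (x dd u : vec) k : dot [ffun e => x e + k * dd e] u = dot x u + k * dot dd u.
Proof.
by rewrite /Defs.dot mulr_sumr -big_split; apply: eq_bigr => e _; rewrite ffunE /=; ring.
Qed.

Lemma flow_movel (x dd : vec) k : is_flow x -> is_flow dd -> is_flow [ffun e => x e + k * dd e].
Proof.
move=> /flow_dot Hx /flow_dot Hd; apply/flow_dot => v.
by rewrite dot_movel Hx Hd mulr0 addr0.
Qed.

Lemma move_step (x dd : vec) : VO x -> is_flow dd ->
  (forall C, is_circuit t h C -> tightb x C -> dot dd (xC C) = 0) ->
  (exists C, is_circuit t h C /\ 0 < dot dd (xC C)) ->
  exists tau, [/\ 0 < tau, VO [ffun e => x e + tau * dd e],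
    (forall C, is_circuit t h C -> tightb x C -> tightb [ffun e => x e + tau * dd e] C) &
    exists C, [/\ is_circuit t h C, ~~ tightb x C & tightb [ffun e => x e + tau * dd e] C]].
Proof.
move=> Hx Hdd Horth [C0 [HC0 Hpos0]].
pose cl := [seq C <- enum [set C | circb C] | 0 < dot dd (xC C)].
pose rat C := (q (xC C) - 2 * dot x (xC C)) / (2 * dot dd (xC C)).
pose tau := minl [seq rat C | C <- cl].
have Hcl : forall C, C \in cl -> is_circuit t h C /\ 0 < dot dd (xC C).
  by move=> C; rewrite mem_filter mem_enum inE => /andP[Hp /pbP Hc].
have Hcl' : forall C, is_circuit t h C -> 0 < dot dd (xC C) -> C \in cl.
  by move=> C Hc Hp; rewrite mem_filter Hp mem_enum inE; apply/pbP.
have Htau_le : forall C, is_circuit t h C -> 0 < dot dd (xC C) -> tau <= rat C.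
  by move=> C Hc Hp; apply: minl_le; apply: map_f; apply: Hcl'.
have [Cm HCm Etau] : exists2 Cm, Cm \in cl & tau = rat Cm.
  have : tau \in [seq rat C | C <- cl].
    apply: minl_mem; apply/eqP => Hnil.
    have : rat C0 \in [seq rat C | C <- cl] by apply: map_f; apply: Hcl'.
    by rewrite Hnil.
  by case/mapP => C HC ->; exists C.
have [HCmc HCmp] := Hcl _ HCm.
have Hslack : forall C, is_circuit t h C -> 0 <= q (xC C) - 2 * dot x (xC C).
  by move=> C HC; rewrite subr_ge0; exact: (VO_circ Hx HC).
have HCmnt : ~~ tightb x Cm.
  by apply/negP => Ht; move: HCmp; rewrite (Horth _ HCmc Ht) ltxx.
have Hsp : 0 < q (xC Cm) - 2 * dot x (xC Cm).
  rewrite lt_neqAle Hslack // andbT eq_sym subr_eq0; apply: contra HCmnt.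
  by rewrite /tightb eq_sym.
have Htau : 0 < tau by rewrite Etau /rat divr_gt0 // mulr_gt0.
exists tau; split => //.
- apply: circ_VO; first exact: flow_movel (Hx.1) Hdd.
  move=> C HC; rewrite dot_movel; have H0 := VO_circ Hx HC.
  case: (lerP (dot dd (xC C)) 0) => Hs.
    have : tau * dot dd (xC C) <= 0 by apply: mulr_ge0_le0 => //; apply: ltW.
    move=> H1; lra.
  have := Htau_le _ HC Hs; rewrite /rat ler_pdivlMr ?mulr_gt0 // => H1; lra.
- move=> C HC Ht; rewrite /tightb dot_movel (Horth C HC Ht) mulr0 addr0; exact: Ht.
- exists Cm; split => //; rewrite /tightb dot_movel Etau /rat; apply/eqP.
  have HD : dot dd (xC Cm) != 0 by rewrite gt_eqF.
  field; exact: HD.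
Qed.


End Pos.


Section Desc.
Variables (V E : finType) (t h : E -> V) (R : realFieldType).
Notation arc := (E * bool)%type.
Notation otail := (Defs.otail t h).
Notation ohead := (Defs.ohead t h).
Notation vec := {ffun E -> R}.
Notation oval := (@oval E R).
Notation dot := (@dot E R).
Notation q := (@q E R).
Notation is_flow := (@is_flow V E t h R).
Notation xC := (@xC E R).
Notation cwalk := (cwalk t h).
Notation orev := (@orev E).
Notation chR := (@chR E R).
Notation VO := (@VO V E t h R).
Notation tightb := (@tightb E R).
Notation circb := (circb t h).

Definition Dt (D : {set arc}) (y : vec) :=
  forall C, is_circuit t h C -> C \subset D -> 2 * dot y (xC C) = q (xC C).
Definition Nn (y : vec) := #|[set C | circb C && ~~ tightb y C]|.

Lemma rc_sum (x : vec) (p : V -> R) s : cwalk s -> uniq (map fst s) ->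
  \sum_(o <- s) (p (otail o) + (1 - 2 * oval x o) - p (ohead o)) =
  q (xC [set o in s]) - 2 * dot x (xC [set o in s]).
Proof.
move=> Hc Hu; rewrite xC_ch // q_ch // dot_ch.
have E1 := telescope p Hc.
rewrite sumrB big_split /= sumrB -mulr_sumr; lra.
Qed.

Lemma step (D : {set arc}) (x : vec) : strongly_connected t h D ->
  (forall y, VO y -> Dt D y -> (Nn y < Nn x)%N -> FD t h D y) -> VO x -> Dt D x -> FD t h D x.
Proof.
move=> HD IH Hx HDt.
pose S := [set o : arc | pb (exists C, [/\ is_circuit t h C, tightb x C & o \in C])].
have HSP : forall o, reflect (exists C, [/\ is_circuit t h C, tightb x C & o \in C]) (o \in S).
  by move=> o; rewrite inE; apply: pbP.
case: (classic (forall e, ~~ bridge t h e -> cov S e)) => [Hcov|Hncov].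
  have [p Hp] := pot_of_circ (fun C HC => VO_circ Hx HC).
  pose rc o := p (otail o) + (1 - 2 * oval x o) - p (ohead o).
  have Hrc0 : forall o, 0 <= rc o by move=> o; have := Hp o; rewrite /rc; lra.
  have HrcS : forall o, o \in S -> rc o = 0.
    move=> o /HSP [C [HC Ht Ho]]; have [s [Hc Hu Es]] := circ_walk HC.
    subst C; have Hs := rc_sum x p Hc Hu.
    move: Ht; rewrite /tightb => /eqP Ht.
    apply: (psum_seq0 (l := s) (F := rc)) => //; last by move: Ho; rewrite inE.
    by rewrite /rc Hs Ht subrr.
  have HO : is_orientation S.
    move=> e; apply/negP => /andP[H1 H2]; have := HrcS _ H1; have := HrcS _ H2.
    rewrite /rc /Defs.oval /Defs.otail /Defs.ohead /=; lra.
  have HSS : strongly_connected t h S.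
    apply: (SC_crit HO) => o /HSP [C [HC Ht Ho]].
    have [s [Hc Hu Es]] := circ_walk HC; subst C; move: Ho; rewrite inE => Ho.
    apply: (cwalk_reach Hc) Ho => o' Ho'; apply: connect1; apply: dirrel_arc.
    by apply/HSP; exists [set o in s]; split => //; rewrite inE.
  have HG : orientation_of_Gcirc t h S.
    split => // e; apply/idP/idP => [Hc|Hb]; last exact: Hcov.
    case/orP: Hc => H.
      have [C [HC _ Ho]] := HSP _ H; have [s [Hc Hu Es]] := circ_walk HC; subst C.
      by move: Ho; rewrite inE => Ho; exact: (cwalk_nobridge Hc Hu Ho).
    have [C [HC _ Ho]] := HSP _ H; have [s [Hc Hu Es]] := circ_walk HC; subst C.
    by move: Ho; rewrite inE => Ho; exact: (cwalk_nobridge Hc Hu Ho).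
  have HDS : D \subset S.
    apply/subsetP => o Ho; have [s [Hc Ha Hu]] := arc_cycle HD Ho.
    apply/HSP; exists [set o' in o :: s]; split.
    - exact: circ_of.
    - rewrite /tightb; apply/eqP; apply: HDt; first exact: circ_of.
      by apply/subsetP => o'; rewrite inE => Ho'; exact: (allP Ha).
    - by rewrite inE mem_head.
  have HvS : is_vD t h S x.
    split; first exact: Hx.1.
    move=> C HC Hsub; have [s [Hc Hu Es]] := circ_walk HC; subst C.
    have Hs := rc_sum x p Hc Hu.
    have Hz : \sum_(o <- s) rc o = 0.
      rewrite big_seq big1 // => o Ho; apply: HrcS; apply: (subsetP Hsub); by rewrite inE.
    move: Hs; rewrite /rc in Hz; rewrite Hz => Hs; lra.
  by apply: conv_pt; exists S; split => //; split.
have [e0 [Hb0 Hc0]] : exists e0, ~~ bridge t h e0 /\ ~~ cov S e0.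
  apply: NNPP => Hn; apply: Hncov => e Hb; apply: negbNE; apply/negP => Hc; apply: Hn; by exists e.
have [s0 [Hc0' Hu0 _]] := nobridge_cwalk (o := (e0, true)) Hb0.
pose y := chR ((e0, true) :: s0).
pose ltl := map xC (enum [set C | circb C && tightb x C]).
have [w [Hw Hwo]] := GS ltl y.
pose d := subc y w.
have Hlt : forall u, u \in ltl -> exists C, [/\ is_circuit t h C, tightb x C & u = xC C].
  by move=> u /mapP [C]; rewrite mem_enum inE => /andP[/pbP HC Ht] ->; exists C.
have Hwf : is_flow w.
  by apply: (spn_flow _ Hw) => u /Hlt [C [HC _ ->]]; exact: flow_xC.
have Hyf : is_flow y by apply: flow_ch.
have Hdf : is_flow d.
  apply/flow_dot => v; rewrite /d dot_subl.
  by have /flow_dot -> := Hyf; have /flow_dot -> := Hwf; rewrite subrr.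
have Hw0 : w e0 = 0.
  apply: (Hw (fun w => w e0 = 0)).
  - by rewrite ffunE.
  - by move=> a b Ha Hb; rewrite ffunE Ha Hb addr0.
  - by move=> k a Ha; rewrite ffunE Ha mulr0.
  - move=> u /Hlt [C [HC Ht ->]]; rewrite ffunE.
    have Hn : forall b, (e0, b) \notin C.
      move=> b; apply/negP => Hin.
      have : (e0, b) \in S by apply/HSP; exists C.
      by case: b Hin => _ HS; move: Hc0; rewrite /cov HS ?orbT.
    by rewrite (negbTE (Hn true)) (negbTE (Hn false)).
have Hd0 : d e0 != 0.
  rewrite /d ffunE Hw0 subr0 /y.
  by rewrite (ch_val R (o := (e0, true)) Hu0) ?mem_head // /sgn /= oner_neq0.
have Hdorth : forall C, is_circuit t h C -> tightb x C -> dot d (xC C) = 0.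
  move=> C HC Ht; apply: Hwo; apply: map_f; rewrite mem_enum inE Ht andbT; exact/pbP.
pose nd := vsc (-1) d.
have Hndf : is_flow nd.
  by apply/flow_dot => v; rewrite /nd dot_scl; have /flow_dot -> := Hdf; rewrite mulr0.
have Hnd0 : nd e0 != 0 by rewrite /nd ffunE mulN1r oppr_eq0.
have Hndorth : forall C, is_circuit t h C -> tightb x C -> dot nd (xC C) = 0.
  by move=> C HC Ht; rewrite /nd dot_scl Hdorth // mulr0.
have [tau1 [Ht1 HV1 Hti1 [C1 [HC1 Hnt1 Htt1]]]] := move_step Hx Hdf Hdorth (pos_circ Hdf Hd0).
have [tau2 [Ht2 HV2 Hti2 [C2 [HC2 Hnt2 Htt2]]]] := move_step Hx Hndf Hndorth (pos_circ Hndf Hnd0).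
have HDtm : forall (z : vec), (forall C, is_circuit t h C -> tightb x C -> tightb z C) -> Dt D z.
  move=> z Hz C HC Hsub; apply/eqP; apply: Hz => //; apply/eqP; exact: HDt.
have HNm : forall (z : vec) C0, (forall C, is_circuit t h C -> tightb x C -> tightb z C) ->
    is_circuit t h C0 -> ~~ tightb x C0 -> tightb z C0 -> (Nn z < Nn x)%N.
  move=> z C0 Hz HC0 Hn0 Ht0; apply: proper_card; apply/properP; split.
    apply/subsetP => C; rewrite !inE => /andP[Hcb Hnt]; rewrite Hcb /=.
    by apply: contra Hnt => Ht; apply: Hz => //; apply/pbP.
  by exists C0; rewrite !inE ?Hnt1 ?Ht0 ?andbF // Hn0 andbT; apply/pbP.
have F1 := IH _ HV1 (HDtm _ Hti1) (HNm _ _ Hti1 HC1 Hnt1 Htt1).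
have F2 := IH _ HV2 (HDtm _ Hti2) (HNm _ _ Hti2 HC2 Hnt2 Htt2).
have Hk0 : 0 <= tau2 / (tau1 + tau2) by rewrite divr_ge0 // ltW // addr_gt0.
have Hk1 : tau2 / (tau1 + tau2) <= 1.
  by rewrite ler_pdivrMr ?addr_gt0 // mul1r lerDr ltW.
have Hcv := conv_comb F1 F2 Hk0 Hk1.
suff Ex : x = [ffun e => tau2 / (tau1 + tau2) * [ffun e0 => x e0 + tau1 * d e0] e +
                  (1 - tau2 / (tau1 + tau2)) * [ffun e0 => x e0 + tau2 * nd e0] e].
  by rewrite {1}Ex; exact: Hcv.
apply/ffunP => e; rewrite !ffunE.
have Hs : tau1 + tau2 != 0 by rewrite gt_eqF // addr_gt0.
by field.
Qed.

Lemma descent (D : {set arc}) : strongly_connected t h D ->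
  forall n (x : vec), (Nn x <= n)%N -> VO x -> Dt D x -> FD t h D x.
Proof.
move=> HD; elim=> [|n IHn] x HN Hx HDt; apply: step => // y Hy HDy Hlt.
  by move: (leq_trans Hlt HN).
by apply: IHn => //; rewrite -ltnS; apply: leq_trans Hlt HN.
Qed.

End Desc.


Section Fin.
Variables (V E : finType) (t h : E -> V) (R : realFieldType).
Notation arc := (E * bool)%type.
Notation vec := {ffun E -> R}.
Notation oval := (@oval E R).
Notation dot := (@dot E R).
Notation q := (@q E R).
Notation is_flow := (@is_flow V E t h R).
Notation xC := (@xC E R).
Notation VO := (@VO V E t h R).

Lemma xC_pos (C : {set arc}) o : 0 < oval (xC C) o -> o \in C.
Proof.
case: o => e b; rewrite /Defs.oval /= ffunE.
case Ht: ((e, true) \in C); case Hf: ((e, false) \in C); case: b => //= H; exfalso;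
  move: H; rewrite ?opprK ?oppr0; lra.
Qed.

Lemma xC_sq (g : R) (C : {set arc}) e : -1 <= g <= 1 -> g * xC C e <= xC C e * xC C e.
Proof.
case/andP => H1 H2; rewrite ffunE.
by case: ifP => _; [|case: ifP => _]; rewrite ?mulr1 ?mulrN1 ?mulr0 ?mul0r ?mulN1r ?opprK; lra.
Qed.

Lemma FD_flow D (x : vec) : FD t h D x -> is_flow x.
Proof. by apply: conv_flow => y [D' [_ Hy]]; exact: Hy.1. Qed.

Lemma FD_tight D (x : vec) C : FD t h D x -> is_circuit t h C -> C \subset D ->
  2 * dot x (xC C) = q (xC C).
Proof.
move=> Hx HC Hsub.
have := conv_dot (c := q (xC C) / 2) (u := xC C) Hx.
have H : (forall y, (exists D', in_SD t h D D' /\ is_vD t h D' y) -> dot y (xC C) = q (xC C) / 2).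
  move=> y [D' [[_ _ HDD'] Hy]]; have := Hy.2 C HC (subset_trans Hsub HDD'); lra.
move/(_ H) => ->; lra.
Qed.

Lemma FD_VO D (x : vec) : FD t h D x -> VO x.
Proof. by apply: conv_VO => y [D' [[HS HG _] Hy]]; exact: vD_VO HS HG Hy. Qed.

End Fin.

Theorem mainTheorem9 (R : realFieldType) (V E : finType) (t h : E -> V)
  (Gconn : graph_connected t h) (D : {set E * bool})
  (HD : strongly_connected t h D) :
  [/\ (forall D', in_SD t h D D' -> exists! v : {ffun E -> R}, is_vD t h D' v),
      is_face (VO t h (R := R)) (FD t h (R := R) D)
    & forall o : E * bool, o \in D <-> phi t h (FD t h (R := R) D) o].
Proof.
split.
- move=> D' [HS' HG' _]; have [v Hv] := vD_exists t h R HS'.1.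
  exists v; split => // v' Hv'; exact: vD_unique HS' HG' Hv Hv'.
- pose Cs := [set C : {set E * bool} | circb t h C && (C \subset D)].
  pose a : {ffun E -> R} := [ffun e => \sum_(C in Cs) xC R C e].
  pose b : R := \sum_(C in Cs) q (xC R C) / 2.
  have Hda : forall x : {ffun E -> R}, dot a x = \sum_(C in Cs) dot (xC R C) x.
    move=> x; rewrite /Defs.dot; under eq_bigr do rewrite ffunE mulr_suml.
    by rewrite exchange_big.
  exists a, b; split.
    move=> x Hx; rewrite Hda; apply: ler_sum => C; rewrite inE => /andP[/pbP HC _].
    by have := VO_circ Hx HC; rewrite dotC; lra.
  move=> x; split.
    move=> Hx; split; first exact: FD_VO Hx.
    rewrite Hda; apply: eq_bigr => C; rewrite inE => /andP[/pbP HC Hsub].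
    by have := FD_tight Hx HC Hsub; rewrite dotC; lra.
  case=> Hx Heq.
  have HDt : Dt t h D x.
    move=> C HC Hsub.
    have Hnn : forall C, C \in Cs -> 0 <= q (xC R C) / 2 - dot (xC R C) x.
      move=> C' ; rewrite inE => /andP[/pbP HC' _]; have := VO_circ Hx HC'; rewrite dotC; lra.
    have Hs0 : \sum_(C in Cs) (q (xC R C) / 2 - dot (xC R C) x) = 0.
      by rewrite sumrB -Hda Heq subrr.
    have HCs : C \in Cs by rewrite inE Hsub andbT; apply/pbP.
    have := psumr_eq0P Hnn Hs0 HCs; rewrite dotC; lra.
  exact: (descent HD (leqnn _) Hx HDt).
- move=> o; split.
    move=> Ho; have [s [Hc Ha Hu]] := arc_cycle HD Ho.
    have HC := circ_of Hc Hu.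
    exists (xC R [set o' in o :: s]); split.
    + by exists [set o' in o :: s].
    + move=> x Hx; split; first exact: FD_flow Hx.
      apply: FD_tight Hx HC _.
      by apply/subsetP => o'; rewrite inE => Ho'; exact: (allP Ha).
    + by rewrite xC_ch // oval_ch // mem_head.
  case=> lam [[C [HC ->]] HF Hpos].
  have HoC := xC_pos Hpos.
  apply: NNPP => HnD.
  have [D' [HS' HG' HDD'] Hr] : exists2 D', in_SD t h D D' & orev o \in D'.
    case Hr: (orev o \in D).
      have [D' [H1 H2 H3]] := ext HD.
      by exists D'; [split | exact: (subsetP H3 _ Hr)].
    have Hcov : ~~ cov D o.1.
      by case: o HoC HnD Hpos Hr => e [] /= _ /negP H1 _ H2; rewrite /cov negb_or H1 H2.
    have Hb : ~~ bridge t h o.1.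
      have [s [Hc Hu Es]] := circ_walk HC; move: HoC; rewrite Es inE => Hos.
      exact: (cwalk_nobridge Hc Hu Hos).
    have [D1 [HS1 Hsub1 Hr1]] := ear (r := orev o) HD Hb Hcov.
    have [D' [H1 H2 H3]] := ext HS1.
    by exists D'; [split => //; exact: subset_trans H3 | exact: (subsetP H3 _ Hr1)].
  have [v Hv] := vD_exists t h R HS'.1.
  have HFv : FD t h D v by apply: conv_pt; exists D'; split.
  have [_ Hlv] := HF v HFv.
  have Horth := vD_orth HS' HG' Hv (flow_xC R HC).
  have Hlt : dot (xC R D') (xC R C) < q (xC R C).
    rewrite /Defs.q /Defs.dot (bigD1 o.1) //= [X in _ < X](bigD1 o.1) //=.
    apply: ltr_leD.
      have H1 : oval (xC R D') o = -1.
        by have := xC_orient R HS'.1 Hr; rewrite oval_rev => /eqP; rewrite eqr_oppLR => /eqP.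
      move: H1 Hpos; rewrite /Defs.oval; case: o.2 => H1 H2; nra.
    apply: ler_sum => e _; apply: xC_sq; exact: xC_bound.
  lra.
Qed.
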